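(* Let $G$ be a group and $R$ a retract of $G$. Suppose $G$ is weakly hyperbolic relative to a collection of subgroups $\mathcal A=\{A_1,\ldots,A_m\}$ with $A_i\le R$ for all $i=1,\ldots,m$. Then $R$ is weakly hyperbolic relative to $\mathcal A$.
   Context: $R\le G$ is a retract if there is a homomorphism $G\to R$ restricting to the identity on $R$. For a group $G$ and a collection $\mathcal H=\{H_1,\ldots,H_m\}$ of subgroups, $X\subset G$ is a relative generating set if $G$ is generated by $X\cup H_1\cup\cdots\cup H_m$; the relative Cayley graph is the Cayley graph of $G$ with respect to $X\cup H_1\cup\cdots\cup H_m$ with combinatorial metric; $G$ is weakly hyperbolic relative to $\mathcal H$ if for some finite relative generating set $X$ this relative Cayley graph is hyperbolic. *)

(* Defs.v *)
From Stdlib Require Import List Arith.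
Import ListNotations.

Record Group := {
  gcar :> Type;
  gmul : gcar -> gcar -> gcar;
  ginv : gcar -> gcar;
  gone : gcar;
  gmul_assoc : forall x y z, gmul x (gmul y z) = gmul (gmul x y) z;
  gmul_1l : forall x, gmul gone x = x;
  gmul_Vl : forall x, gmul (ginv x) x = gone
}.

Arguments gmul {g} _ _.
Arguments ginv {g} _.
Arguments gone {g}.

Definition is_subgroup (G : Group) (H : G -> Prop) : Prop :=
  H gone /\ (forall x y, H x -> H y -> H (gmul x y)) /\ (forall x, H x -> H (ginv x)).

Definition is_hom (G : Group) (f : G -> G) : Prop :=
  forall x y, f (gmul x y) = gmul (f x) (f y).

Definition is_retract (G : Group) (R : G -> Prop) : Prop :=
  is_subgroup G R /\
  exists r : G -> G, is_hom G r /\ (forall g, R (r g)) /\ (forall g, R g -> r g = g).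

Definition in_gen (G : Group) (S : G -> Prop) (g : G) : Prop :=
  forall K : G -> Prop, is_subgroup G K -> (forall s, S s -> K s) -> K g.

Definition generates (G : Group) (H : G -> Prop) (S : G -> Prop) : Prop :=
  forall g, H g <-> in_gen G S g.

Fixpoint word_prod (G : Group) (l : list G) : G :=
  match l with [] => gone | s :: l' => gmul s (word_prod G l') end.

Definition word_len_le (G : Group) (S : G -> Prop) (g : G) (n : nat) : Prop :=
  exists l : list G, length l <= n /\ Forall (fun s => S s \/ S (ginv s)) l
                     /\ word_prod G l = g.

Definition cay_dist (G : Group) (S : G -> Prop) (x y : G) (n : nat) : Prop :=
  word_len_le G S (gmul (ginv x) y) n /\
  forall m, word_len_le G S (gmul (ginv x) y) m -> n <= m.

(* Gromov hyperbolicity of the Cayley graph of H w.r.t. S (vertex set H),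
   via the four-point condition:
   d(x,y)+d(z,w) <= max(d(x,z)+d(y,w), d(x,w)+d(y,z)) + 2 delta *)
Definition cayley_hyperbolic (G : Group) (H : G -> Prop) (S : G -> Prop) : Prop :=
  exists delta : nat,
    forall x y z w : G, H x -> H y -> H z -> H w ->
    forall dxy dzw dxz dyw dxw dyz : nat,
      cay_dist G S x y dxy -> cay_dist G S z w dzw ->
      cay_dist G S x z dxz -> cay_dist G S y w dyw ->
      cay_dist G S x w dxw -> cay_dist G S y z dyz ->
      dxy + dzw <= Nat.max (dxz + dyw) (dxw + dyz) + 2 * delta.

Definition rel_gens (G : Group) (X : list G) (Hs : list (G -> Prop)) (g : G) : Prop :=
  In g X \/ exists Hi, In Hi Hs /\ Hi g.

Definition weakly_hyperbolic_rel (G : Group) (H : G -> Prop) (Hs : list (G -> Prop)) : Prop :=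
  exists X : list G,
    (forall x, In x X -> H x) /\
    generates G H (rel_gens G X Hs) /\
    cayley_hyperbolic G H (rel_gens G X Hs).

(* Main.v *)
Require Import Defs.
From Stdlib Require Import List Arith Lia Classical ClassicalEpsilon.
Import ListNotations.


Lemma first_true (P : nat -> Prop) m : P m -> exists j, j <= m /\ P j /\ (j = 0 \/ ~ P (j-1)).
Proof.
  induction m; intros H.
  - exists 0; auto.
  - destruct (classic (P m)) as [h|h].
    + destruct (IHm h) as [j [? [? ?]]]. exists j; split; [lia|auto].
    + exists (S m). repeat split; auto. right. simpl. rewrite Nat.sub_0_r. auto.
Qed.

Lemma bounded_max (B : nat) : forall (P : nat -> Prop), (exists m, P m) -> (forall m, P m -> m <= B) ->
  exists m, P m /\ forall m', P m' -> m' <= m.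
Proof.
  induction B; intros P [m0 Hm0] Hb.
  - exists m0. split; auto. intros m' H. pose proof (Hb _ H). pose proof (Hb _ Hm0). lia.
  - destruct (classic (P (S B))) as [h|h].
    + exists (S B). split; auto.
    + apply IHB. exists m0; auto. intros m H. specialize (Hb _ H).
      assert (m <> S B) by (intro; subst; auto). lia.
Qed.

Lemma least_ex (P : nat -> Prop) : (exists n, P n) -> exists n, P n /\ forall m, P m -> n <= m.
Proof.
  intros [n Hn]. revert Hn. induction n as [n IH] using lt_wf_ind. intros Hn.
  destruct (classic (exists m, m < n /\ P m)) as [[m [Hm Pm]]|h].
  - exact (IH m Hm Pm).
  - exists n. split; auto. intros m Pm. destruct (le_lt_dec n m); auto.
    exfalso; apply h; eauto.
Qed.

Fixpoint mind (f : nat -> nat) (n : nat) : nat :=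
  match n with 0 => f 0 | S n' => Nat.min (mind f n') (f (S n')) end.

Lemma mind_le f n i : i <= n -> mind f n <= f i.
Proof.
  induction n; intros H; simpl.
  - assert (i = 0) by lia; subst; auto.
  - destruct (Nat.eq_dec i (S n)). subst; lia. specialize (IHn ltac:(lia)). lia.
Qed.

Lemma mind_ex f n : exists i, i <= n /\ mind f n = f i.
Proof.
  induction n; simpl.
  - exists 0; auto.
  - destruct IHn as [i [Hi E]]. destruct (le_lt_dec (mind f n) (f (S n))).
    + exists i. split. lia. lia.
    + exists (S n). split; lia.
Qed.

Lemma sq_pow t : t * t <= 2 ^ t + 2.
Proof.
  assert (H : forall t, 3 <= t -> 2 * t + 1 <= 2 ^ t).
  { induction t0; intros h. lia. destruct (Nat.eq_dec t0 2). subst; simpl; lia.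
    specialize (IHt0 ltac:(lia)). rewrite Nat.pow_succ_r'. lia. }
  induction t. simpl; lia.
  destruct (le_lt_dec t 2).
  - destruct t as [|[|[|]]]; simpl; lia.
  - specialize (H t ltac:(lia)). rewrite Nat.pow_succ_r'. nia.
Qed.

Definition Kbound (C δ : nat) : nat := C + δ * (4 * C + 16 * δ + 3).

Lemma arith_bound C δ D : 2 * D <= C + 2 * (δ * (Nat.log2 (8 * D) + 1)) -> D <= Kbound C δ.
Proof.
  intros H. unfold Kbound.
  destruct D as [|D']. lia. set (D := S D') in *.
  pose proof (Nat.log2_spec (8 * D) ltac:(lia)) as [Hs _].
  set (t := Nat.log2 (8 * D)) in *.
  pose proof (sq_pow t).
  assert (Ht : t <= 4 * C + 16 * δ + 2) by nia.
  nia.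
Qed.

Section XMetric.
Variable T : Type.
Variable d : T -> T -> nat.
Hypothesis d_refl : forall x, d x x = 0.
Hypothesis d_sym : forall x y, d x y = d y x.
Hypothesis d_tri : forall x y z, d x z <= d x y + d y z.
Hypothesis d_geo : forall a b, exists g : nat -> T, g 0 = a /\ g (d a b) = b /\
   forall i j, i <= j <= d a b -> d (g i) (g j) = j - i.
Variable δ : nat.
Hypothesis four : forall x y z w, d x y + d z w <= Nat.max (d x z + d y w) (d x w + d y z) + 2*δ.

Lemma L_path (u : nat -> T) m C q : (forall t, t < m -> d (u t) (u (S t)) <= C) ->
 exists j, j <= m /\ d (u j) q + d (u 0) (u m) <= d (u 0) (u j) + d (u m) q + 2*δ /\
   d (u j) q + d (u 0) (u m) <= d (u 0) q + d (u j) (u m) + 2*δ + 2*C.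
Proof.
  intros Hs.
  destruct (first_true (fun j => d (u j) q + d (u 0) (u m) <= d (u 0) (u j) + d (u m) q + 2*δ) m)
    as [j [Hj [HA Hprev]]].
  - lia.
  - exists j. split; auto. split; auto. destruct Hprev as [->|Hn].
    + lia.
    + assert (j <> 0) by (intro; subst; simpl in Hn; contradiction).
      pose proof (four (u 0) (u m) (u (j-1)) q).
      pose proof (Hs (j-1) ltac:(lia)) as Hst. replace (S (j-1)) with j in Hst by lia.
      pose proof (d_tri (u j) (u (j-1)) q). pose proof (d_tri (u (j-1)) (u j) (u m)).
      pose proof (d_sym (u j) (u (j-1))). pose proof (d_sym (u m) (u (j-1))).
      lia.
Qed.

Lemma log_lemma (u : nat -> T) C q D : forall k a b, a <= b -> b - a <= 2^k ->
  (forall t, a <= t < b -> d (u t) (u (S t)) <= C) -> (forall t, a <= t <= b -> D <= d q (u t)) ->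
  2*D + d (u a) (u b) <= d (u a) q + d (u b) q + C + 2*(δ*k).
Proof.
  induction k; intros a b Hab Hl Hs Hf.
  - simpl in Hl. destruct (Nat.eq_dec a b).
    + subst. rewrite d_refl. pose proof (Hf b ltac:(lia)). rewrite d_sym in H. lia.
    + assert (b = S a) by lia. subst. pose proof (Hs a ltac:(lia)).
      pose proof (Hf a ltac:(lia)). pose proof (Hf (S a) ltac:(lia)).
      pose proof (d_sym q (u a)). pose proof (d_sym q (u (S a))). lia.
  - rewrite Nat.mul_succ_r. rewrite Nat.pow_succ_r' in Hl.
    destruct (le_lt_dec (b - a) (2^k)).
    + specialize (IHk a b Hab l Hs Hf). lia.
    + set (m := a + 2^k).
      pose proof (IHk a m ltac:(lia) ltac:(lia) ltac:(intros; apply Hs; lia) ltac:(intros; apply Hf; lia)).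
      pose proof (IHk m b ltac:(lia) ltac:(lia) ltac:(intros; apply Hs; lia) ltac:(intros; apply Hf; lia)).
      pose proof (four (u a) (u b) (u m) q). rewrite (d_sym (u b) (u m)) in *. lia.
Qed.

Lemma mid_point a b k : k <= d a b -> exists c, d a c = k /\ d c b = d a b - k.
Proof.
  intros Hk. destruct (d_geo a b) as [g [H0 [H1 H2]]].
  exists (g k). split.
  - rewrite <- H0 at 1. rewrite H2; lia.
  - rewrite <- H1 at 1. rewrite H2; lia.
Qed.

Definition concat (u1 : nat -> T) N1 (u2 : nat -> T) : nat -> T :=
  fun t => if t <=? N1 then u1 t else u2 (t - N1).

Lemma concat_steps u1 N1 u2 N2 C : u1 N1 = u2 0 ->
  (forall t, t < N1 -> d (u1 t) (u1 (S t)) <= C) -> (forall t, t < N2 -> d (u2 t) (u2 (S t)) <= C) ->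
  forall t, t < N1 + N2 -> d (concat u1 N1 u2 t) (concat u1 N1 u2 (S t)) <= C.
Proof.
  intros E H1 H2 t Ht. unfold concat.
  destruct (Nat.leb_spec t N1); destruct (Nat.leb_spec (S t) N1).
  - apply H1; lia.
  - assert (t = N1) by lia. subst. rewrite E. replace (S N1 - N1) with 1 by lia.
    apply H2; lia.
  - lia.
  - replace (S t - N1) with (S (t - N1)) by lia. apply H2; lia.
Qed.

Lemma concat_pts u1 N1 u2 N2 (P : T -> Prop) :
  (forall t, t <= N1 -> P (u1 t)) -> (forall t, t <= N2 -> P (u2 t)) ->
  forall t, t <= N1 + N2 -> P (concat u1 N1 u2 t).
Proof.
  intros H1 H2 t Ht. unfold concat. destruct (Nat.leb_spec t N1).
  apply H1; lia. apply H2; lia.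
Qed.

Lemma concat_0 u1 N1 u2 : concat u1 N1 u2 0 = u1 0.
Proof. reflexivity. Qed.

Lemma concat_end u1 N1 u2 N2 : u1 N1 = u2 0 -> concat u1 N1 u2 (N1 + N2) = u2 N2.
Proof.
  intros E. unfold concat. destruct (Nat.leb_spec (N1 + N2) N1).
  - assert (N2 = 0) by lia. subst. rewrite Nat.add_0_r. auto.
  - f_equal; lia.
Qed.


Lemma geo_seq a b : exists g : nat -> T, g 0 = a /\ g (d a b) = b /\
   (forall t, t < d a b -> d (g t) (g (S t)) = 1) /\
   (forall t, t <= d a b -> d a (g t) = t /\ d (g t) b = d a b - t).
Proof.
  destruct (d_geo a b) as [g [H0 [H1 H2]]]. exists g. repeat split; auto.
  - intros t Ht. rewrite H2; lia.
  - rewrite <- H0 at 1. rewrite H2; lia.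
  - rewrite <- H1 at 1. rewrite H2; lia.
Qed.

Section Morse.
Variable σ : nat -> T.
Variable n C : nat.
Hypothesis Cpos : 1 <= C.
Hypothesis stepσ : forall t, t < n -> d (σ t) (σ (S t)) <= C.
Hypothesis lowσ : forall i j, i <= j <= n -> j - i <= d (σ i) (σ j).

Definition Dσ p := mind (fun i => d p (σ i)) n.

Lemma seg i j : i <= n -> j <= n -> exists (s : nat -> T) L, s 0 = σ i /\ s L = σ j /\
  L <= d (σ i) (σ j) /\ (forall t, t < L -> d (s t) (s (S t)) <= C) /\
  (forall t, t <= L -> exists k, k <= n /\ s t = σ k).
Proof.
  intros Hi Hj. destruct (le_lt_dec i j).
  - exists (fun t => σ (i + t)), (j - i). repeat split.
    + f_equal; lia.
    + f_equal; lia.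
    + apply lowσ; lia.
    + intros t Ht. replace (i + S t) with (S (i + t)) by lia. apply stepσ; lia.
    + intros t Ht. exists (i + t). split; auto; lia.
  - exists (fun t => σ (i - t)), (i - j). repeat split.
    + f_equal; lia.
    + f_equal; lia.
    + rewrite d_sym. apply lowσ; lia.
    + intros t Ht. rewrite d_sym. replace (i - t) with (S (i - S t)) by lia. apply stepσ; lia.
    + intros t Ht. exists (i - t). split; auto; lia.
Qed.

Definition K1 := Kbound C δ.

Theorem morse1 : forall p, d (σ 0) p + d p (σ n) = d (σ 0) (σ n) ->
  exists i, i <= n /\ d p (σ i) <= K1.
Proof.
  set (x := σ 0). set (y := σ n).
  destruct (bounded_max (d x y) (fun m => exists p, d x p + d p y = d x y /\ Dσ p = m))
    as [D [[p0 [Hp0 HD]] Hmax]].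
  { exists (Dσ x), x. split; auto. rewrite d_refl; auto. }
  { intros m [p [Hp <-]]. unfold Dσ. pose proof (mind_le (fun i => d p (σ i)) n 0 ltac:(lia)).
    simpl in H. fold x in H. rewrite d_sym in H. lia. }
  assert (HDle : forall p, d x p + d p y = d x y -> Dσ p <= D).
  { intros p Hp. apply Hmax. eauto. }
  assert (Hfar : forall k, k <= n -> D <= d p0 (σ k)).
  { intros k Hk. rewrite <- HD. unfold Dσ. apply (mind_le (fun i => d p0 (σ i))); auto. }
  enough (HK : D <= K1).
  { intros p Hp. destruct (mind_ex (fun i => d p (σ i)) n) as [i [Hi E]].
    exists i. split; auto. pose proof (HDle p Hp). unfold Dσ in H. lia. }
  assert (sel : forall e ie, ie <= n -> σ ie = e ->
     (forall c, d e c + d c p0 = d e p0 -> d x c + d c y = d x y) ->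
     exists c i, i <= n /\ d e c + d c p0 = d e p0 /\ d c p0 <= 2*D /\ d c (σ i) <= D /\
       (d c p0 = 2*D \/ (d c (σ i) = 0 /\ D <= d c p0))).
  { intros e ie Hie Ee Hgeo. destruct (le_lt_dec (2*D) (d e p0)).
    - destruct (mid_point e p0 (d e p0 - 2*D) ltac:(lia)) as [c [Hc1 Hc2]].
      assert (Hcg : d x c + d c y = d x y) by (apply Hgeo; lia).
      destruct (mind_ex (fun i => d c (σ i)) n) as [i [Hi E]].
      pose proof (HDle c Hcg). unfold Dσ in H.
      exists c, i. repeat split; auto; lia.
    - exists e, ie. rewrite d_refl. subst e. rewrite d_refl. repeat split; auto; try lia.
      right. split; auto. rewrite d_sym. apply Hfar; auto. }
  destruct (sel x 0 ltac:(lia) eq_refl) as [y' [i' [Hi' [Ay [By [Cy Dy]]]]]].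
  { intros c Hc. pose proof (d_tri x c y). pose proof (d_tri c p0 y). lia. }
  destruct (sel y n ltac:(lia) eq_refl) as [z' [j' [Hj' [Az [Bz [Cz Dz]]]]]].
  { intros c Hc. pose proof (d_tri x c y). pose proof (d_tri x p0 c).
    rewrite (d_sym x p0) in *. rewrite (d_sym y c) in *. rewrite (d_sym c p0) in *.
    rewrite (d_sym y p0) in *. lia. }
  destruct (Nat.eq_dec D 0) as [->|HD0]. unfold K1, Kbound. lia.
  destruct (geo_seq y' (σ i')) as [g1 [g10 [g1e [g1s g1d]]]].
  destruct (geo_seq (σ j') z') as [g2 [g20 [g2e [g2s g2d]]]].
  destruct (seg i' j' Hi' Hj') as [s [L [s0 [sL [sLe [ss sp]]]]]].
  set (a1 := d y' (σ i')) in *. set (a2 := d (σ j') z') in *.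
  set (u := concat g1 a1 (concat s L g2)).
  set (N := a1 + (L + a2)).
  assert (Hsteps : forall t, t < N -> d (u t) (u (S t)) <= C).
  { apply concat_steps. rewrite g1e. rewrite concat_0. auto.
    intros t Ht; rewrite g1s; auto.
    apply concat_steps. rewrite sL. auto. auto. intros t Ht; rewrite g2s; auto. }
  assert (Hpts : forall t, t <= N -> D <= d p0 (u t)).
  { apply (concat_pts _ _ _ _ (fun v => D <= d p0 v)).
    - intros t Ht. destruct (g1d t Ht) as [E1 E2].
      pose proof (d_tri p0 (g1 t) y'). rewrite (d_sym (g1 t) y') in H.
      rewrite (d_sym p0 y') in H. lia.
    - apply (concat_pts _ _ _ _ (fun v => D <= d p0 v)).
      + intros t Ht. destruct (sp t Ht) as [k [Hk ->]]. auto.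
      + intros t Ht. destruct (g2d t Ht) as [E1 E2].
        pose proof (d_tri p0 (g2 t) z'). pose proof (d_sym p0 z').
        pose proof (d_sym z' (σ j')). lia. }
  assert (Hu0 : u 0 = y') by (unfold u; rewrite concat_0; auto).
  assert (HuN : u N = z').
  { unfold u, N. rewrite concat_end. rewrite concat_end. auto. rewrite sL; auto.
    rewrite g1e. rewrite concat_0; auto. }
  assert (HL : L <= 6 * D).
  { pose proof (d_tri (σ i') y' (σ j')). pose proof (d_tri y' p0 (σ j')).
    pose proof (d_tri p0 z' (σ j')). rewrite (d_sym (σ i') y') in *.
    rewrite (d_sym z' (σ j')) in *. rewrite (d_sym p0 z') in *. lia. }
  assert (HN : N <= 8 * D) by (pose proof (d_sym z' (σ j')); unfold N, a1, a2 in *; lia).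
  pose proof (Nat.log2_spec (8 * D) ltac:(lia)) as [_ Hlog].
  pose proof (log_lemma u C p0 D (S (Nat.log2 (8 * D))) 0 N ltac:(lia) ltac:(lia)
     ltac:(intros; apply Hsteps; lia) ltac:(intros; apply Hpts; lia)) as Hlg.
  rewrite Hu0, HuN in Hlg.
  pose proof (d_tri x y' z'). pose proof (d_tri x z' y). pose proof (d_tri y' p0 z').
  rewrite (d_sym y z') in *. rewrite (d_sym y p0) in *. rewrite (d_sym z' p0) in *.
  assert (2 * D <= C + 2 * (δ * (Nat.log2 (8 * D) + 1))).
  { rewrite Nat.add_1_r. lia. }
  apply arith_bound; auto.
Qed.

Lemma σ_up i j : i <= j <= n -> d (σ i) (σ j) <= C * (j - i).
Proof.
  intros [Hij Hjn]. induction j.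
  - assert (i = 0) by lia. subst. rewrite d_refl. lia.
  - destruct (Nat.eq_dec i (S j)). subst. rewrite d_refl. lia.
    pose proof (IHj ltac:(lia) ltac:(lia)). pose proof (stepσ j ltac:(lia)).
    pose proof (d_tri (σ i) (σ j) (σ (S j))).
    replace (S j - i) with (S (j - i)) by lia. rewrite Nat.mul_succ_r. lia.
Qed.

Definition K2 := C * (2 * K1 + 1) + K1.

Theorem morse2 : forall i, i <= n -> exists q, d (σ 0) q + d q (σ n) = d (σ 0) (σ n) /\
  d (σ i) q <= K2.
Proof.
  intros i Hi. set (x := σ 0). set (y := σ n).
  destruct (geo_seq x y) as [g [g0 [gm [gs gd]]]].
  set (m := d x y) in *.
  assert (Hg : forall j, j <= m -> d x (g j) + d (g j) y = d x y).
  { intros j Hj. destruct (gd j Hj). fold m. lia. }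
  set (Bef := fun j => exists k, k <= i /\ d (g j) (σ k) <= K1).
  destruct (classic (Bef m)) as [Hm|Hm].
  - destruct Hm as [k [Hk Hd]]. rewrite gm in Hd.
    exists y. split. rewrite d_refl. lia.
    pose proof (lowσ k n ltac:(lia)). rewrite (d_sym y) in Hd. fold y in H.
    pose proof (σ_up i n ltac:(lia)). fold y in H0.
    assert (C * (n - i) <= C * K1) by (apply Nat.mul_le_mono_l; lia).
    unfold K2. nia.
  - destruct (first_true (fun j => ~ Bef j) m Hm) as [j [Hj [Hnb Hprev]]].
    destruct Hprev as [->|Hp].
    + exfalso. apply Hnb. exists 0. split. lia. rewrite g0. unfold x. rewrite d_refl. lia.
    + apply NNPP in Hp. destruct Hp as [k [Hk Hdk]].
      destruct (morse1 (g j) ltac:(apply Hg; auto)) as [k' [Hk' Hdk']].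
      assert (i < k') by (destruct (le_lt_dec k' i); auto; exfalso; apply Hnb; exists k'; auto).
      assert (j <> 0) by (intro; subst; apply Hnb; exists 0; split; [lia|]; rewrite g0; unfold x; rewrite d_refl; lia).
      pose proof (gs (j-1) ltac:(lia)) as Hst. replace (S (j-1)) with j in Hst by lia.
      pose proof (lowσ k k' ltac:(lia)).
      pose proof (d_tri (σ k) (g (j-1)) (σ k')). pose proof (d_tri (g (j-1)) (g j) (σ k')).
      rewrite (d_sym (σ k) (g (j-1))) in *.
      pose proof (σ_up k i ltac:(lia)).
      assert (C * (i - k) <= C * (2 * K1 + 1)) by (apply Nat.mul_le_mono_l; lia).
      exists (g (j-1)). split. apply Hg; lia.
      pose proof (d_tri (σ i) (σ k) (g (j-1))). rewrite (d_sym (σ i) (σ k)) in *.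
      pose proof (d_sym (σ k) (g (j-1))). unfold K2. lia.
Qed.

End Morse.
End XMetric.

Section YMetric.
Variable T : Type.
Variable d : T -> T -> nat.
Hypothesis d_refl : forall x, d x x = 0.
Hypothesis d_sym : forall x y, d x y = d y x.
Hypothesis d_tri : forall x y z, d x z <= d x y + d y z.
Hypothesis d_geo : forall a b, exists g : nat -> T, g 0 = a /\ g (d a b) = b /\
   forall i j, i <= j <= d a b -> d (g i) (g j) = j - i.
Variable δ : nat.
Hypothesis four : forall x y z w, d x y + d z w <= Nat.max (d x z + d y w) (d x w + d y z) + 2*δ.

Variable V : T -> Prop.
Variable dY : T -> T -> nat.
Variable C : nat.
Hypothesis Cpos : 1 <= C.
Hypothesis dY_refl : forall x, V x -> dY x x = 0.
Hypothesis dY_sym : forall x y, V x -> V y -> dY x y = dY y x.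
Hypothesis dY_tri : forall x y z, V x -> V y -> V z -> dY x z <= dY x y + dY y z.
Hypothesis dY_geo : forall a b, V a -> V b -> exists g : nat -> T, (forall t, V (g t)) /\ g 0 = a /\
   g (dY a b) = b /\ forall i j, i <= j <= dY a b -> dY (g i) (g j) = j - i.
Hypothesis F1 : forall a b, V a -> V b -> dY a b <= d a b.
Hypothesis F2 : forall a b, V a -> V b -> dY a b <= 1 -> d a b <= C.

Definition ygeo (σ : nat -> T) a b := (forall t, V (σ t)) /\ σ 0 = a /\ σ (dY a b) = b /\
   forall i j, i <= j <= dY a b -> dY (σ i) (σ j) = j - i.

Lemma ygeo_step σ a b : ygeo σ a b -> forall t, t < dY a b -> d (σ t) (σ (S t)) <= C.
Proof. intros [HV [H0 [H1 H2]]] t Ht. apply F2; auto. rewrite H2; lia. Qed.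

Lemma ygeo_low σ a b : ygeo σ a b -> forall i j, i <= j <= dY a b -> j - i <= d (σ i) (σ j).
Proof. intros [HV [H0 [H1 H2]]] i j Hij. rewrite <- H2 by lia. apply F1; auto. Qed.

Lemma ygeo_pt σ a b : ygeo σ a b -> forall k, k <= dY a b -> dY a (σ k) + dY (σ k) b = dY a b.
Proof.
  intros [HV [H0 [H1 H2]]] k Hk. rewrite <- H0 at 1. rewrite <- H1 at 1.
  rewrite !H2 by lia. lia.
Qed.

Definition KY := K2 δ C + (3 * δ + 1) + K1 δ C.

Lemma near_side a b q σ : V a -> V b -> ygeo σ a b -> d a q + d b q <= d a b + 2 * δ ->
  exists k, k <= dY a b /\ d q (σ k) <= 3 * δ + 1 + K1 δ C.
Proof.
  intros Va Vb Hσ Hq.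
  destruct (geo_seq T d d_geo a b) as [g [g0 [gm [gs gd]]]].
  destruct (L_path T d d_sym d_tri δ four g (d a b) 1 q) as [j [Hj [HA HB]]].
  { intros; rewrite gs; auto. }
  rewrite g0, gm in *. destruct (gd j Hj) as [E1 E2].
  assert (Hjq : d (g j) q <= 3 * δ + 1) by lia.
  destruct Hσ as [HV [H0 [H1 H2]]] eqn:Hs.
  destruct (morse1 T d d_refl d_sym d_tri d_geo δ four σ (dY a b) C Cpos
     (ygeo_step σ a b Hσ) (ygeo_low σ a b Hσ) (g j)) as [k [Hk Hd]].
  { rewrite H0, H1. lia. }
  exists k. split; auto. pose proof (d_tri q (g j) (σ k)). pose proof (d_sym q (g j)). lia.
Qed.

Theorem ythin x y z σa σb σc : V x -> V y -> V z -> ygeo σa x y -> ygeo σb x z -> ygeo σc z y ->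
  forall i, i <= dY x y -> exists w, ((exists k, k <= dY x z /\ w = σb k) \/ (exists k, k <= dY z y /\ w = σc k))
     /\ V w /\ dY (σa i) w <= KY.
Proof.
  intros Vx Vy Vz Ha Hb Hc i Hi.
  destruct (morse2 T d d_refl d_sym d_tri d_geo δ four σa (dY x y) C Cpos
     (ygeo_step σa x y Ha) (ygeo_low σa x y Ha) i Hi) as [q [Hq Hd]].
  destruct Ha as [HVa [Ha0 [Ha1 Ha2]]] eqn:Ea. rewrite Ha0, Ha1 in Hq.
  pose proof (four x y z q).
  assert (Hcase : d x q + d z q <= d x z + 2 * δ \/ d z q + d y q <= d z y + 2 * δ).
  { rewrite (d_sym q y) in Hq. pose proof (d_sym y z). lia. }
  destruct Hcase as [Hc1|Hc2].
  - destruct (near_side x z q σb Vx Vz Hb Hc1) as [k [Hk Hdk]].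
    exists (σb k). split. left; eauto. split. apply Hb.
    destruct Hb as [HVb _]. rewrite F1; auto.
    pose proof (d_tri (σa i) q (σb k)). unfold KY. lia.
  - destruct (near_side z y q σc Vz Vy Hc Hc2) as [k [Hk Hdk]].
    exists (σc k). split. right; eauto. split. apply Hc.
    destruct Hc as [HVc _]. rewrite F1; auto.
    pose proof (d_tri (σa i) q (σc k)). unfold KY. lia.
Qed.


Lemma ygeo_ex a b : V a -> V b -> exists σ, ygeo σ a b.
Proof. intros Va Vb. destruct (dY_geo a b Va Vb) as [g Hg]. exists g. exact Hg. Qed.

Theorem yfour : forall x y z w, V x -> V y -> V z -> V w ->
  dY x y + dY z w <= Nat.max (dY x z + dY y w) (dY x w + dY y z) + 2 * (3 * KY + 1).
Proof.
  intros x y z w Vx Vy Vz Vw.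
  destruct (ygeo_ex x y Vx Vy) as [sxy Hxy].
  destruct (ygeo_ex x w Vx Vw) as [sxw Hxw].
  destruct (ygeo_ex w y Vw Vy) as [swy Hwy].
  destruct (ygeo_ex x z Vx Vz) as [sxz Hxz].
  destruct (ygeo_ex z y Vz Vy) as [szy Hzy].
  pose proof Hxy as [HVxy [Exy0 [Exy1 Exy2]]].
  pose proof Hwy as [HVwy [Ewy0 [Ewy1 Ewy2]]].
  pose proof Hxw as [HVxw [Exw0 [Exw1 Exw2]]].
  set (Bp := fun j => exists k, k <= dY w y /\ dY (sxy j) (swy k) <= KY).
  destruct (first_true Bp (dY x y)) as [j [Hj [HBj Hprev]]].
  { exists (dY w y). split; auto. rewrite Exy1, Ewy1. rewrite dY_refl; auto. lia. }
  set (q := sxy j).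
  assert (Vq : V q) by apply HVxy.
  assert (HB : exists q1 q2, V q1 /\ V q2 /\ dY x q1 + dY q1 w = dY x w /\ dY w q2 + dY q2 y = dY w y /\
             dY q q1 <= KY + 1 /\ dY q q2 <= KY).
  { destruct HBj as [k [Hk Hdk]].
    assert (Hq2 : dY w (swy k) + dY (swy k) y = dY w y) by (apply (ygeo_pt swy); auto).
    destruct (Nat.eq_dec j 0) as [Hj0|Hj0'].
    - exists x, (swy k). repeat split; auto. rewrite dY_refl; auto.
      unfold q. rewrite Hj0, Exy0. rewrite dY_refl; auto. lia.
    - destruct Hprev as [?|Hn]; [lia|].
      destruct (ythin x y w sxy sxw swy Vx Vy Vw Hxy Hxw Hwy (j-1) ltac:(lia))
        as [w' [[[k' [Hk' ->]]|[k' [Hk' ->]]] [Vw' Hdw']]].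
      + exists (sxw k'), (swy k). repeat split; auto.
        apply (ygeo_pt sxw); auto.
        pose proof (dY_tri q (sxy (j-1)) (sxw k') Vq (HVxy _) Vw').
        assert (dY q (sxy (j-1)) = 1).
        { unfold q. rewrite dY_sym; auto. rewrite Exy2; lia. }
        lia.
      + exfalso. apply Hn. exists k'. split; auto.
  }
  destruct HB as [q1 [q2 [Vq1 [Vq2 [G1 [G2 [D1 D2]]]]]]].
  assert (SB : 2 * dY w q + dY x y <= dY x w + dY y w + 4 * KY + 2).
  { assert (Gq : dY x q + dY q y = dY x y) by (apply (ygeo_pt sxy); auto).
    pose proof (dY_tri x q1 q Vx Vq1 Vq). pose proof (dY_tri q q2 y Vq Vq2 Vy).
    pose proof (dY_tri w q1 q Vw Vq1 Vq). pose proof (dY_tri w q2 q Vw Vq2 Vq).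
    pose proof (dY_sym q1 q Vq1 Vq). pose proof (dY_sym q2 q Vq2 Vq).
    pose proof (dY_sym q1 w Vq1 Vw). pose proof (dY_sym y w Vy Vw). lia. }
  destruct (ythin x y z sxy sxz szy Vx Vy Vz Hxy Hxz Hzy j Hj)
    as [q' [[[k' [Hk' ->]]|[k' [Hk' ->]]] [Vq' Hdq']]]; fold q in Hdq'.
  - assert (Gq : dY x (sxz k') + dY (sxz k') z = dY x z) by (apply (ygeo_pt sxz); auto).
    pose proof (dY_tri x (sxz k') w Vx Vq' Vw). pose proof (dY_tri z (sxz k') w Vz Vq' Vw).
    pose proof (dY_tri (sxz k') q w Vq' Vq Vw). pose proof (dY_sym z (sxz k') Vz Vq').
    pose proof (dY_sym q (sxz k') Vq Vq'). pose proof (dY_sym q w Vq Vw). lia.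
  - assert (Gq : dY z (szy k') + dY (szy k') y = dY z y) by (apply (ygeo_pt szy); auto).
    pose proof (dY_tri y (szy k') w Vy Vq' Vw). pose proof (dY_tri z (szy k') w Vz Vq' Vw).
    pose proof (dY_tri (szy k') q w Vq' Vq Vw). pose proof (dY_sym y (szy k') Vy Vq').
    pose proof (dY_sym q (szy k') Vq Vq'). pose proof (dY_sym q w Vq Vw).
    pose proof (dY_sym z y Vz Vy). lia.
Qed.

End YMetric.

Section GroupLemmas.
Variable G : Group.

Lemma mul_Vr (x : G) : gmul x (ginv x) = gone.
Proof.
  rewrite <- (gmul_1l G (gmul x (ginv x))).
  rewrite <- (gmul_Vl G (ginv x)) at 1.
  rewrite <- gmul_assoc. rewrite (gmul_assoc G (ginv x) x (ginv x)).
  rewrite gmul_Vl, gmul_1l. apply gmul_Vl.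
Qed.

Lemma mul_1r (x : G) : gmul x gone = x.
Proof. rewrite <- (gmul_Vl G x). rewrite gmul_assoc, mul_Vr, gmul_1l. auto. Qed.

Lemma inv_uniq (a b : G) : gmul a b = gone -> a = ginv b.
Proof. intros H. rewrite <- (mul_1r a). rewrite <- (mul_Vr b). rewrite gmul_assoc, H, gmul_1l; auto. Qed.

Lemma inv_inv (x : G) : ginv (ginv x) = x.
Proof. symmetry. apply inv_uniq. apply mul_Vr. Qed.

Lemma inv_mul (x y : G) : ginv (gmul x y) = gmul (ginv y) (ginv x).
Proof.
  symmetry. apply inv_uniq. rewrite <- gmul_assoc. rewrite (gmul_assoc G (ginv x) x y).
  rewrite gmul_Vl, gmul_1l. apply gmul_Vl.
Qed.

Lemma inv_one : ginv (@gone G) = gone.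
Proof. symmetry. apply inv_uniq. apply gmul_1l. Qed.

Lemma cancel3 (a b c : G) : gmul (ginv (gmul a b)) (gmul a (gmul b c)) = c.
Proof.
  rewrite inv_mul. rewrite <- gmul_assoc. rewrite (gmul_assoc G (ginv a) a).
  rewrite gmul_Vl, gmul_1l, gmul_assoc, gmul_Vl, gmul_1l. auto.
Qed.

Lemma idem_one (a : G) : gmul a a = a -> a = gone.
Proof.
  intros H. rewrite <- (gmul_1l G a). rewrite <- (gmul_Vl G a) at 1.
  rewrite <- gmul_assoc, H. apply gmul_Vl.
Qed.

Definition letter (S : G -> Prop) (s : G) := S s \/ S (ginv s).

Lemma wp_app (l1 l2 : list G) : word_prod G (l1 ++ l2) = gmul (word_prod G l1) (word_prod G l2).
Proof.
  induction l1; simpl. rewrite gmul_1l; auto. rewrite IHl1, gmul_assoc; auto.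
Qed.

Lemma wp_inv (l : list G) : word_prod G (rev (map ginv l)) = ginv (word_prod G l).
Proof.
  induction l; simpl. symmetry; apply inv_one.
  rewrite wp_app, IHl. simpl. rewrite mul_1r. symmetry; apply inv_mul.
Qed.

Variable S : G -> Prop.

Lemma wl_mono g n m : word_len_le G S g n -> n <= m -> word_len_le G S g m.
Proof. intros [l [H1 [H2 H3]]] H. exists l. repeat split; auto. lia. Qed.

Lemma wl_mul g h n m : word_len_le G S g n -> word_len_le G S h m -> word_len_le G S (gmul g h) (n + m).
Proof.
  intros [l1 [A1 [B1 C1]]] [l2 [A2 [B2 C2]]]. exists (l1 ++ l2). repeat split.
  rewrite length_app; lia. apply Forall_app; auto. rewrite wp_app; subst; auto.
Qed.

Lemma wl_inv g n : word_len_le G S g n -> word_len_le G S (ginv g) n.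
Proof.
  intros [l [A [B Cc]]]. exists (rev (map ginv l)). repeat split.
  rewrite length_rev, length_map; auto.
  apply Forall_rev. apply Forall_map. eapply Forall_impl; [|exact B]. simpl.
  intros s [h|h]; [right; rewrite inv_inv; auto|left; auto].
  rewrite wp_inv; subst; auto.
Qed.

Lemma wl_one : word_len_le G S gone 0.
Proof. exists []. simpl. repeat split; auto. Qed.

Lemma wl_letter s : letter S s -> word_len_le G S s 1.
Proof. intros h. exists [s]. simpl. repeat split; auto. apply mul_1r. Qed.

Lemma in_gen_word g : in_gen G S g -> exists n, word_len_le G S g n.
Proof.
  intros H. apply H.
  - split; [|split].
    + exists 0; apply wl_one.
    + intros x y [n Hn] [m Hm]. exists (n + m). apply wl_mul; auto.
    + intros x [n Hn]. exists n. apply wl_inv; auto.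
  - intros s Hs. exists 1. apply wl_letter. left; auto.
Qed.

Lemma word_in_sub (K : G -> Prop) g n : is_subgroup G K -> (forall s, S s -> K s) ->
  word_len_le G S g n -> K g.
Proof.
  intros [K1 [K2 K3]] HS [l [_ [B <-]]]. induction l; simpl. auto.
  inversion B; subst. apply K2; auto. destruct H1 as [h|h]. auto.
  rewrite <- (inv_inv a). apply K3. auto.
Qed.

Lemma word_in_gen g n : word_len_le G S g n -> in_gen G S g.
Proof. intros H K HK HS. eapply word_in_sub; eauto. Qed.

Definition dist (x y : G) : nat := epsilon (inhabits 0) (fun n => cay_dist G S x y n).

Lemma dist_spec x y : (exists n, word_len_le G S (gmul (ginv x) y) n) -> cay_dist G S x y (dist x y).
Proof.
  intros Hex. unfold dist. apply epsilon_spec.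
  destruct (least_ex _ Hex) as [n [Hn Hmin]]. exists n. split; auto.
Qed.

Lemma cay_dist_unique x y n m : cay_dist G S x y n -> cay_dist G S x y m -> n = m.
Proof. intros [A1 B1] [A2 B2]. specialize (B1 _ A2). specialize (B2 _ A1). lia. Qed.

Section WM.
Variable V : G -> Prop.
Hypothesis Vsub : is_subgroup G V.
Hypothesis SV : forall s, S s -> V s.
Hypothesis Vword : forall g, V g -> exists n, word_len_le G S g n.

Lemma V_ex x y : V x -> V y -> exists n, word_len_le G S (gmul (ginv x) y) n.
Proof. intros. apply Vword. destruct Vsub as [_ [H2 H3]]. auto. Qed.

Lemma dd_spec x y : V x -> V y -> cay_dist G S x y (dist x y).
Proof. intros; apply dist_spec, V_ex; auto. Qed.

Lemma dd_le x y n : V x -> V y -> word_len_le G S (gmul (ginv x) y) n -> dist x y <= n.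
Proof. intros Vx Vy H. apply (dd_spec x y Vx Vy). auto. Qed.

Lemma dd_word x y : V x -> V y -> word_len_le G S (gmul (ginv x) y) (dist x y).
Proof. intros Vx Vy. apply (dd_spec x y Vx Vy). Qed.

Lemma dd_refl x : V x -> dist x x = 0.
Proof. intros Vx. pose proof (dd_le x x 0 Vx Vx). rewrite gmul_Vl in H. specialize (H wl_one). lia. Qed.

Lemma dd_sym_le x y : V x -> V y -> dist x y <= dist y x.
Proof.
  intros Vx Vy. apply dd_le; auto. pose proof (wl_inv _ _ (dd_word y x Vy Vx)).
  rewrite inv_mul, inv_inv in H. auto.
Qed.

Lemma dd_sym x y : V x -> V y -> dist x y = dist y x.
Proof. intros Vx Vy. pose proof (dd_sym_le x y Vx Vy); pose proof (dd_sym_le y x Vy Vx). lia. Qed.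

Lemma dd_tri x y z : V x -> V y -> V z -> dist x z <= dist x y + dist y z.
Proof.
  intros Vx Vy Vz. apply dd_le; auto.
  pose proof (wl_mul _ _ _ _ (dd_word x y Vx Vy) (dd_word y z Vy Vz)).
  replace (gmul (ginv x) z) with (gmul (gmul (ginv x) y) (gmul (ginv y) z)); auto.
  rewrite <- gmul_assoc. rewrite (gmul_assoc G y). rewrite mul_Vr, gmul_1l; auto.
Qed.

Lemma dd_geo a b : V a -> V b -> exists g : nat -> G, (forall t, V (g t)) /\ g 0 = a /\
   g (dist a b) = b /\ forall i j, i <= j <= dist a b -> dist (g i) (g j) = j - i.
Proof.
  intros Va Vb. set (m := dist a b).
  destruct (dd_word a b Va Vb) as [l [Hl [HF Hp]]]. fold m in Hl.
  assert (Hlen : length l = m).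
  { assert (m <= length l) by (apply dd_le; auto; exists l; repeat split; auto). lia. }
  assert (VW : forall l', Forall (letter S) l' -> V (word_prod G l')).
  { intros l' H'. eapply (word_in_sub V _ (length l') Vsub SV). exists l'; repeat split; auto. }
  assert (Ffirst : forall t l', Forall (letter S) l' -> Forall (letter S) (firstn t l')).
  { intros t l' H'. rewrite <- (firstn_skipn t l') in H'. apply Forall_app in H'. tauto. }
  assert (Fskip : forall t l', Forall (letter S) l' -> Forall (letter S) (skipn t l')).
  { intros t l' H'. rewrite <- (firstn_skipn t l') in H'. apply Forall_app in H'. tauto. }
  set (g := fun t => gmul a (word_prod G (firstn t l))).
  assert (Vg : forall t, V (g t)).
  { intros t. destruct Vsub as [_ [H2 _]]. apply H2; auto. }
  assert (Hup : forall i j, i <= j <= m -> dist (g i) (g j) <= j - i).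
  { intros i j Hij. apply dd_le; auto.
    exists (skipn i (firstn j l)). repeat split.
    - rewrite length_skipn, length_firstn. lia.
    - apply Fskip, Ffirst; auto.
    - unfold g. rewrite <- (firstn_skipn i (firstn j l)) at 2.
      rewrite firstn_firstn. replace (Nat.min i j) with i by lia.
      rewrite wp_app. rewrite cancel3. auto. }
  assert (g0 : g 0 = a) by (unfold g; simpl; apply mul_1r).
  assert (gm : g m = b).
  { unfold g. rewrite <- Hlen, firstn_all, Hp. rewrite gmul_assoc, mul_Vr, gmul_1l; auto. }
  exists g. repeat split; auto.
  intros i j Hij. apply Nat.le_antisymm. apply Hup; auto.
  pose proof (dd_tri a (g i) b Va (Vg i) Vb). pose proof (dd_tri (g i) (g j) b (Vg i) (Vg j) Vb).
  pose proof (Hup 0 i ltac:(lia)). pose proof (Hup j m ltac:(lia)). rewrite g0 in *. rewrite gm in *.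
  fold m in H. lia.
Qed.
End WM.
End GroupLemmas.

Lemma sum_le {T} (f : T -> nat) (l : list T) x : In x l -> f x <= fold_right (fun x acc => f x + acc) 0 l.
Proof. induction l; simpl; intros H. contradiction. destruct H as [->|H]. lia. specialize (IHl H). lia. Qed.

Theorem lemma3p3 (G : Group) (R : G -> Prop) (A : list (G -> Prop)) :
  is_retract G R ->
  (forall Ai, In Ai A -> is_subgroup G Ai /\ (forall g, Ai g -> R g)) ->
  weakly_hyperbolic_rel G (fun _ => True) A ->
  weakly_hyperbolic_rel G R A.
Proof.
  intros [Rsub [r [rhom [rR rid]]]] HA [X [_ [Hgen [δ Hhyp]]]].
  set (S := rel_gens G X A) in *.
  set (X' := map r X).
  set (S' := rel_gens G X' A).
  assert (r1 : r gone = gone).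
  { apply idem_one. rewrite <- rhom, gmul_1l. auto. }
  assert (rinv : forall s, r (ginv s) = ginv (r s)).
  { intros s. apply inv_uniq. rewrite <- rhom, gmul_Vl. auto. }
  assert (Tsub : is_subgroup G (fun _ => True)) by (repeat split).
  assert (wordS : forall g, True -> exists n, word_len_le G S g n).
  { intros g _. apply in_gen_word. apply Hgen. auto. }
  assert (SmapS' : forall s, S s -> S' (r s)).
  { intros s [h|[Ai [HAi Hs]]].
    - left. apply in_map; auto.
    - right. exists Ai. split; auto. rewrite rid; auto. apply (HA Ai HAi); auto. }
  assert (wmap : forall g n, word_len_le G S g n -> word_len_le G S' (r g) n).
  { intros g n [l [Hl [HF Hp]]]. exists (map r l). repeat split.
    - rewrite length_map; auto.
    - apply Forall_map. eapply Forall_impl; [|exact HF]. simpl.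
      intros s [h|h]. left; auto. right. rewrite <- rinv. auto.
    - subst g. clear -rhom r1. induction l; simpl; auto. rewrite rhom, IHl; auto. }
  assert (S'R : forall s, S' s -> R s).
  { intros s [h|[Ai [HAi Hs]]].
    - unfold X' in h. apply in_map_iff in h. destruct h as [x [<- _]]. apply rR.
    - apply (HA Ai HAi); auto. }
  assert (wordS' : forall g, R g -> exists n, word_len_le G S' g n).
  { intros g Rg. destruct (wordS g I) as [n Hn]. exists n. rewrite <- (rid g Rg). auto. }
  assert (Rmul : forall a b, R a -> R b -> R (gmul (ginv a) b)).
  { intros a b Ra Rb. destruct Rsub as [_ [H2 H3]]. auto. }
  set (d := dist G S). set (dY := dist G S').
  set (C := 1 + fold_right (fun x acc => d gone (r x) + acc) 0 X).
  assert (sumle : forall x, In x X -> d gone (r x) <= C).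
  { intros x Hx. unfold C. pose proof (sum_le (fun x => d gone (r x)) X x Hx). simpl in H. lia. }
  assert (letterC : forall s, letter G S' s -> word_len_le G S s C).
  { assert (base : forall s, S' s -> word_len_le G S s C).
    { intros s [h|[Ai [HAi Hs]]].
      - unfold X' in h. apply in_map_iff in h. destruct h as [x [<- Hx]].
        pose proof (dd_word G S _ Tsub wordS gone (r x) I I) as Hw.
        rewrite inv_one, gmul_1l in Hw. eapply wl_mono; [exact Hw|]. apply sumle; auto.
      - eapply wl_mono. apply wl_letter. left. right. exists Ai; auto. unfold C; lia. }
    intros s [h|h]. auto. rewrite <- (inv_inv G s). apply wl_inv. auto. }
  assert (F1 : forall a b, R a -> R b -> dY a b <= d a b).
  { intros a b Ra Rb. apply (dd_le G S' R Rsub wordS' a b); auto.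
    rewrite <- (rid _ (Rmul a b Ra Rb)). apply wmap. apply (dd_word G S _ Tsub wordS); auto. }
  assert (F2 : forall a b, R a -> R b -> dY a b <= 1 -> d a b <= C).
  { intros a b Ra Rb H1. apply (dd_le G S _ Tsub wordS); auto.
    destruct (dd_word G S' R Rsub wordS' a b Ra Rb) as [l [Hl [HF Hp]]]. fold dY in Hl.
    destruct l as [|s [|s' l]]; simpl in *.
    - rewrite <- Hp. eapply wl_mono. apply wl_one. lia.
    - rewrite <- Hp, mul_1r. inversion HF; subst. apply letterC; auto.
    - lia. }
  assert (four : forall x y z w, d x y + d z w <= Nat.max (d x z + d y w) (d x w + d y z) + 2 * δ).
  { intros x y z w. apply (Hhyp x y z w); auto; apply (dd_spec G S _ Tsub wordS); auto. }
  assert (Cpos : 1 <= C) by (unfold C; lia).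
  pose proof (yfour G d ltac:(intros; apply (dd_refl G S _ Tsub wordS); auto) ltac:(intros; apply (dd_sym G S _ Tsub wordS); auto)
    ltac:(intros; apply (dd_tri G S _ Tsub wordS); auto)
    ltac:(intros a b; destruct (dd_geo G S (fun _ => True) Tsub (fun _ _ => I) wordS a b I I) as [g Hg]; exists g; tauto)
    δ four R dY C Cpos (dd_refl G S' R Rsub wordS') (dd_sym G S' R Rsub wordS') (dd_tri G S' R Rsub wordS')
    (dd_geo G S' R Rsub S'R wordS') F1 F2) as HY.
  exists X'. split; [|split].
  - intros x Hx. unfold X' in Hx. apply in_map_iff in Hx. destruct Hx as [y [<- _]]. apply rR.
  - intros g. split.
    + intros Rg. destruct (wordS' g Rg) as [n Hn]. eapply word_in_gen; eauto.
    + intros Hg. apply Hg; auto.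
  - exists (3 * KY δ C + 1). intros x y z w Rx Ry Rz Rw dxy dzw dxz dyw dxw dyz H1 H2 H3 H4 H5 H6.
    rewrite (cay_dist_unique G S' x y dxy (dY x y)) by (auto; apply (dd_spec G S' R); auto).
    rewrite (cay_dist_unique G S' z w dzw (dY z w)) by (auto; apply (dd_spec G S' R); auto).
    rewrite (cay_dist_unique G S' x z dxz (dY x z)) by (auto; apply (dd_spec G S' R); auto).
    rewrite (cay_dist_unique G S' y w dyw (dY y w)) by (auto; apply (dd_spec G S' R); auto).
    rewrite (cay_dist_unique G S' x w dxw (dY x w)) by (auto; apply (dd_spec G S' R); auto).
    rewrite (cay_dist_unique G S' y z dyz (dY y z)) by (auto; apply (dd_spec G S' R); auto).
    apply HY; auto.
Qed.
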